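(* Let $k\ge 3$, $1\le s\le k-1$, $m\ge 1$, $n=m(k-s)\ge 2k-s$, and let $G$ be the $k$-uniform $s$-cycle with vertex set $\mathbb{Z}_n$ and edges $e_j=\{1+j(k-s),\ldots,s+(j+1)(k-s)\}$ (labels modulo $n$), $j=0,\ldots,m-1$. Then $G$ is regular if and only if $k=q(k-s)$ for some positive integer $q$. In this case every vertex of $G$ has degree $q$.
   Context: A $k$-uniform $s$-cycle with $m$ edges has vertex set $\mathbb{Z}_n$, $n=m(k-s)$ (vertex $n+i$ identified with $i$), and edge set $\{e_0,\ldots,e_{m-1}\}$ with $e_j=\{j(k-s)+1,\ldots,j(k-s)+k\}$; throughout the paper it is assumed that $n\ge 2k-s$. The degree of a vertex is the number of edges containing it; the hypergraph is regular if all degrees are equal. *)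

(* Defs.v *)
From mathcomp Require Import all_boot.
Set Implicit Arguments. Unset Strict Implicit. Unset Printing Implicit Defensive.

(* The k-uniform s-cycle with m edges: vertex set Z_n, n = m(k-s), represented
   by 'I_n (residues 0..n-1, label n+i identified with i).
   Edge e_j = { j(k-s)+1, ..., j(k-s)+k } (mod n), j = 0..m-1. *)
Definition scycle_n (k s m : nat) : nat := m * (k - s).

Definition scycle_edge (k s m : nat) (j : nat) : {set 'I_(scycle_n k s m)} :=
  [set v : 'I_(scycle_n k s m) |
     [exists t : 'I_k, (v : nat) == (j * (k - s) + t.+1) %% scycle_n k s m]].

Definition scycle_deg (k s m : nat) (v : 'I_(scycle_n k s m)) : nat :=
  #|[set j : 'I_m | v \in scycle_edge k s m j]|.

Definition scycle_regular (k s m : nat) : Prop :=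
  forall u v : 'I_(scycle_n k s m), scycle_deg u = scycle_deg v.

(* Main.v *)
Require Import Defs.
From mathcomp Require Import all_boot zify.

Definition gfun (a m j : nat) := if j <= a then a - j else a + m - j.

Lemma g_lt a m j : a < m -> j < m -> gfun a m j < m.
Proof. rewrite /gfun; move=> ? ?; case: (leqP j a) => ?; lia. Qed.

Lemma g_inj a m j j' : a < m -> j < m -> j' < m -> gfun a m j = gfun a m j' -> j = j'.
Proof. rewrite /gfun => ? ? ? ; case: (leqP j a) => ?; case: (leqP j' a) => ?; lia. Qed.

Lemma g_rel a m d j : a < m -> j < m ->
  exists c, j * d + gfun a m j * d = a * d + c * (m * d).
Proof.
move=> Ha Hjm; rewrite /gfun; case: (leqP j a) => Hj.
- exists 0; rewrite -mulnDl subnKC //; lia.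
- exists 1; rewrite -mulnDl mul1n -mulnDl subnKC; last lia. f_equal; lia.
Qed.

Lemma key n m d k a b j : n = m * d -> a < m -> b < d -> j < m -> k < n ->
  (exists t, t < k /\ (a * d + b + 1) %% n = (j * d + t.+1) %% n) <->
  gfun a m j * d + b < k.
Proof.
move=> En Ha Hb Hj Hk.
have [c Hc] := @g_rel a m d j Ha Hj.
have E0 : (a * d + b + 1) %% n = (j * d + (gfun a m j * d + b).+1) %% n.
  have -> : j * d + (gfun a m j * d + b).+1 = c * n + (a * d + b + 1).
    rewrite En; lia.
  by rewrite modnMDl.
split.
- move=> [t [Ht Et]].
  have : (t + (j * d).+1) %% n = ((gfun a m j * d + b) + (j * d).+1) %% n.
    have -> : t + (j * d).+1 = j * d + t.+1 by lia.
    have -> : gfun a m j * d + b + (j * d).+1 = j * d + (gfun a m j * d + b).+1 by lia.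
    by rewrite -Et E0.
  move/eqP; rewrite eqn_modDr.
  have Hg := @g_lt a m j Ha Hj.
  have Hlt : gfun a m j * d + b < n.
    rewrite En. have : gfun a m j * d + b < (gfun a m j).+1 * d by rewrite mulSn; lia.
    move/leq_trans; apply. by rewrite leq_mul2r Hg orbT.
  rewrite !modn_small //; last lia.
  by move/eqP => <-.
- move=> H; exists (gfun a m j * d + b); split => //.
Qed.

Lemma deg_formula k s m (v : 'I_(scycle_n k s m)) a b :
  k < scycle_n k s m -> a < m -> b < k - s ->
  (v : nat) = (a * (k - s) + b + 1) %% scycle_n k s m ->
  scycle_deg v = #|[set i : 'I_m | i * (k - s) + b < k]|.
Proof.
move=> Hk Ha Hb Hv.
pose G := fun j : 'I_m => Ordinal (@g_lt a m j Ha (ltn_ord j)).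
have Ginj : injective G.
  move=> j j' /(congr1 val) /= E; apply/val_inj => /=.
  exact: (@g_inj a m j j' Ha (ltn_ord j) (ltn_ord j') E).
rewrite /scycle_deg -(card_preimset [set i : 'I_m | i * (k - s) + b < k] Ginj).
suff -> : [set j : 'I_m | v \in scycle_edge k s m j] = G @^-1: [set i : 'I_m | i * (k - s) + b < k] by [].
apply/setP => j; rewrite !inE /=.
have := @key (scycle_n k s m) m (k - s) k a b j erefl Ha Hb (ltn_ord j) Hk.
move=> [H1 H2]; apply/idP/idP.
- move/existsP => [t /eqP Et]; apply: H1; exists t; split => //; by rewrite -Hv.
- move=> H; have [t [Ht Et]] := H2 H; apply/existsP; exists (Ordinal Ht).
  by rewrite /= -Et Hv.
Qed.

Lemma decomp k s m (v : 'I_(scycle_n k s m)) : 1 <= k - s ->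
  exists a b, [/\ a < m, b < k - s & (v : nat) = (a * (k - s) + b + 1) %% scycle_n k s m].
Proof.
move=> Hd; have Hv := ltn_ord v; rewrite /scycle_n in Hv *.
case: (posnP v) => Hv0.
- exists m.-1, (k - s).-1; split; [lia|lia|].
  have -> : m.-1 * (k - s) + (k - s).-1 + 1 = m * (k - s).
    have Hm : 0 < m by nia.
    move: Hm Hd; clear; case: m => // m0 _ Hd; rewrite mulSn /=; lia.
  by rewrite modnn Hv0.
- set w := (v : nat).-1.
  exists (w %/ (k - s)), (w %% (k - s)); split.
  + rewrite ltn_divLR //; exact: leq_ltn_trans (leq_pred v) Hv.
  + exact: ltn_pmod.
  + rewrite -divn_eq /w addn1 prednK // modn_small //.
Qed.

Lemma card_lt m q : q <= m -> #|[set i : 'I_m | i < q]| = q.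
Proof.
move=> Hq.
have -> : [set i : 'I_m | i < q] = [set widen_ord Hq i | i : 'I_q].
  apply/setP => i; rewrite !inE; apply/idP/imsetP.
  - move=> Hi; exists (Ordinal Hi) => //; exact: val_inj.
  - by move=> [j _ ->] /=.
rewrite card_imset ?card_ord //; move=> x y /(congr1 val) /= E; exact: val_inj.
Qed.

Theorem proposition3p1 (k s m : nat) :
  3 <= k -> 1 <= s -> s <= k - 1 -> 1 <= m ->
  2 * k - s <= scycle_n k s m ->
  (scycle_regular k s m <-> exists q : nat, 0 < q /\ k = q * (k - s)) /\
  (forall q : nat, 0 < q -> k = q * (k - s) ->
     forall v : 'I_(scycle_n k s m), scycle_deg v = q).
Proof.
move=> Hk3 Hs1 Hsk Hm Hn.
have Hd : 1 <= k - s by lia.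
have Hkn : k + (k - s) <= m * (k - s) by rewrite /scycle_n in Hn; lia.
have Hkn' : k < scycle_n k s m by rewrite /scycle_n; lia.
have part2 : forall q : nat, 0 < q -> k = q * (k - s) ->
     forall v : 'I_(scycle_n k s m), scycle_deg v = q.
  move=> q Hq Ekq v.
  have [a [b [Ha Hb Hv]]] := @decomp k s m v Hd.
  rewrite (@deg_formula k s m v a b Hkn' Ha Hb Hv).
  have Hqm : q <= m.
    rewrite -(@leq_pmul2r (k - s)) //; rewrite -Ekq; lia.
  rewrite -[RHS](@card_lt m q Hqm).
  suff -> : [set i : 'I_m | i * (k - s) + b < k] = [set i : 'I_m | i < q] by [].
  apply/setP => i; rewrite !inE.
  rewrite {1}Ekq; apply/idP/idP => H.
  - rewrite ltnNge; apply/negP => Hqi.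
    have : q * (k - s) <= i * (k - s) by rewrite leq_mul2r Hqi orbT.
    move: H; lia.
  - have : i * (k - s) + (k - s) <= q * (k - s) by rewrite addnC -mulSn leq_mul2r H orbT.
    lia.
split => //.
split; last first.
  move=> [q [Hq Ekq]] u v; by rewrite (part2 q Hq Ekq) (part2 q Hq Ekq).
move=> Hreg.
case: (posnP (k %% (k - s))) => Hr.
  exists (k %/ (k - s)); split.
    rewrite divn_gt0 //; lia.
  by rewrite {1}(divn_eq k (k - s)) Hr addn0.
exfalso.
set d := k - s in Hd Hkn Hr Hreg.
have H1 : 1 < scycle_n k s m by lia.
have Hdn : d < scycle_n k s m by lia.
pose u := Ordinal H1. pose w := Ordinal Hdn.
have Du := @deg_formula k s m u 0 0 Hkn' Hm Hd.
have Dw := @deg_formula k s m w 0 d.-1 Hkn' Hm (ltac:(lia) : d.-1 < k - s).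
have := Hreg u w.
rewrite Du ?Dw.
  2: by rewrite /= mul0n add0n addn1 prednK // modn_small.
  2: by rewrite /= modn_small.
move=> E; rewrite -/d in E.
set q := k %/ d.
have Ekq : k = q * d + k %% d by rewrite /q -divn_eq.
have Hrd : k %% d < d by rewrite ltn_mod; lia.
have Hqm : q < m.
  rewrite -(@ltn_pmul2r d) //; lia.
have : [set i : 'I_m | i * d + d.-1 < k] \proper [set i : 'I_m | i * d + 0 < k].
  apply/properP; split.
    apply/subsetP => i; rewrite !inE; lia.
  exists (Ordinal Hqm); rewrite !inE /=; lia.
by move/proper_card; rewrite E ltnn.
Qed.
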